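(* Let $\mathcal{C}$ be a process theory with discarding. Suppose that for each system $A$ we are given a system $L_A$ and a causal process $p_A : A \to A \otimes L_A$ (a pre-leak) such that (a) $e_A := (\mathrm{id}_A \otimes \top_{L_A}) \circ p_A : A \to A$ is idempotent, $e_A \circ e_A = e_A$, and (b) the choice is coherent for composites: $L_{A\otimes B} = L_A \otimes L_B$ and $p_{A\otimes B} = (\mathrm{id}_A \otimes \sigma_{L_A, B} \otimes \mathrm{id}_{L_B})\circ (p_A \otimes p_B)$. Then the following defines a new process theory with discarding: the systems are those of $\mathcal{C}$; the processes $A \to B$ are exactly the processes of $\mathcal{C}$ of the form $e_B \circ f \circ e_A$ with $f : A \to B$ a process of $\mathcal{C}$; composition is that of $\mathcal{C}$ (so the identity on $A$ is $e_A$); and discarding is $\top_A$ (which satisfies $\top_A \circ e_A = \top_A$). Moreover, in this new theory, the process $(e_A \otimes e_{L_A}) \circ p_A \circ e_A : A \to A \otimes L_A$ is a leak for $A$, i.e. discarding its $L_A$ output yields the new identity $e_A$.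
   Context: A process theory is a strict symmetric monoidal category: objects are systems, morphisms are processes, $\circ$ is sequential composition, $\otimes$ parallel composition, $I$ the unit, $\sigma_{X,Y}$ the symmetry. A process theory with discarding has, for every system $A$, a distinguished effect $\top_A : A \to I$ with $\top_{A\otimes B} = \top_A \otimes \top_B$. A process $f:A\to B$ is causal if $\top_B \circ f = \top_A$. A leak for $A$ in a process theory whose identity on $A$ is $\mathrm{id}_A$ is a process $l : A \to A\otimes L$ with $(\mathrm{id}_A \otimes \top_L)\circ l = \mathrm{id}_A$. *)

(* Defs.v *)
(** Transport of a process along equalities of systems (needed because
    strictness of the monoidal structure is stated with propositional
    equalities of objects). *)
Definition castH {Obj : Type} (Hom : Obj -> Obj -> Type) {A A' B B' : Obj}
  (eA : A = A') (eB : B = B') (f : Hom A B) : Hom A' B' :=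
  match eA in _ = X return Hom X B' with
  | eq_refl => match eB in _ = Y return Hom A Y with eq_refl => f end
  end.

Record PTOps (Obj : Type) (Hom : Obj -> Obj -> Type)
    (tens : Obj -> Obj -> Obj) (I : Obj) := {
  comp_ : forall A B C : Obj, Hom B C -> Hom A B -> Hom A C;
  idp_ : forall A : Obj, Hom A A;
  tensh_ : forall A B C D : Obj, Hom A B -> Hom C D -> Hom (tens A C) (tens B D);
  sym_ : forall A B : Obj, Hom (tens A B) (tens B A)
}.

Section Ops.
Context {Obj : Type} {Hom : Obj -> Obj -> Type} {tens : Obj -> Obj -> Obj} {I : Obj}.
Variable P : PTOps Obj Hom tens I.
Definition comp {A B C : Obj} (g : Hom B C) (f : Hom A B) : Hom A C := @comp_ _ _ _ _ P A B C g f.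
Definition idp (A : Obj) : Hom A A := @idp_ _ _ _ _ P A.
Definition tensh {A B C D : Obj} (f : Hom A B) (g : Hom C D) : Hom (tens A C) (tens B D) :=
  @tensh_ _ _ _ _ P A B C D f g.
Definition sym (A B : Obj) : Hom (tens A B) (tens B A) := @sym_ _ _ _ _ P A B.
End Ops.

(** Axioms of a strict symmetric monoidal category. *)
Record IsProcessTheory {Obj : Type} {Hom : Obj -> Obj -> Type}
    {tens : Obj -> Obj -> Obj} {I : Obj} (P : PTOps Obj Hom tens I) : Prop := {
  comp_assoc : forall (A B C D : Obj) (f : Hom A B) (g : Hom B C) (h : Hom C D),
    comp P h (comp P g f) = comp P (comp P h g) f;
  comp_id_l : forall (A B : Obj) (f : Hom A B), comp P (idp P B) f = f;
  comp_id_r : forall (A B : Obj) (f : Hom A B), comp P f (idp P A) = f;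
  tensh_comp : forall (A B C A' B' C' : Obj) (f : Hom A B) (f' : Hom B C)
      (g : Hom A' B') (g' : Hom B' C'),
    tensh P (comp P f' f) (comp P g' g) = comp P (tensh P f' g') (tensh P f g);
  tensh_id : forall A B : Obj, tensh P (idp P A) (idp P B) = idp P (tens A B);
  tens_assoc : forall A B C : Obj, tens A (tens B C) = tens (tens A B) C;
  tens_unit_l : forall A : Obj, tens I A = A;
  tens_unit_r : forall A : Obj, tens A I = A;
  tensh_assoc : forall (A B C A' B' C' : Obj) (f : Hom A A') (g : Hom B B') (h : Hom C C'),
    castH Hom (tens_assoc A B C) (tens_assoc A' B' C') (tensh P f (tensh P g h))
    = tensh P (tensh P f g) h;
  tensh_unit_l : forall (A B : Obj) (f : Hom A B),
    castH Hom (tens_unit_l A) (tens_unit_l B) (tensh P (idp P I) f) = f;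
  tensh_unit_r : forall (A B : Obj) (f : Hom A B),
    castH Hom (tens_unit_r A) (tens_unit_r B) (tensh P f (idp P I)) = f;
  sym_nat : forall (A B C D : Obj) (f : Hom A B) (g : Hom C D),
    comp P (sym P B D) (tensh P f g) = comp P (tensh P g f) (sym P A C);
  sym_inv : forall A B : Obj, comp P (sym P B A) (sym P A B) = idp P (tens A B);
  sym_hex : forall A B C : Obj,
    sym P A (tens B C)
    = castH Hom eq_refl (tens_assoc B C A)
        (comp P (tensh P (idp P B) (sym P A C))
           (castH Hom (eq_sym (tens_assoc A B C)) (eq_sym (tens_assoc B A C))
              (tensh P (sym P A B) (idp P C))));
  sym_unit : forall A : Obj,
    castH Hom (tens_unit_r A) (tens_unit_l A) (sym P A I) = idp P A
}.

Record ProcessTheoryD (Obj : Type) (Hom : Obj -> Obj -> Type)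
    (tens : Obj -> Obj -> Obj) (I : Obj) := {
  pt_ops :> PTOps Obj Hom tens I;
  pt_ax : IsProcessTheory pt_ops;
  top_ : forall A : Obj, Hom A I;
  top_tens : forall A B : Obj,
    top_ (tens A B) = castH Hom eq_refl (@tens_unit_l _ _ _ _ _ pt_ax I) (tensh pt_ops (top_ A) (top_ B))
}.

Section Disc.
Context {Obj : Type} {Hom : Obj -> Obj -> Type} {tens : Obj -> Obj -> Obj} {I : Obj}.
Variable C : ProcessTheoryD Obj Hom tens I.

Definition top (A : Obj) : Hom A I := @top_ _ _ _ _ C A.
Definition unit_r (A : Obj) : tens A I = A := @tens_unit_r _ _ _ _ _ (@pt_ax _ _ _ _ C) A.
Definition assoc (A B D : Obj) : tens A (tens B D) = tens (tens A B) D :=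
  @tens_assoc _ _ _ _ _ (@pt_ax _ _ _ _ C) A B D.

Definition causal {A B : Obj} (f : Hom A B) : Prop := comp C (top B) f = top A.

Definition is_leak {A L : Obj} (l : Hom A (tens A L)) : Prop :=
  comp C (tensh C (idp C A) (top L)) l = castH Hom eq_refl (eq_sym (unit_r A)) (idp C A).

Variable L : Obj -> Obj.
Variable p : forall A : Obj, Hom A (tens A (L A)).

Definition eproj (A : Obj) : Hom A A :=
  castH Hom eq_refl (unit_r A) (comp C (tensh C (idp C A) (top (L A))) (p A)).

Definition restrHom (A B : Obj) : Type :=
  { h : Hom A B | exists f : Hom A B, h = comp C (eproj B) (comp C f (eproj A)) }.

Variable HL : forall A B : Obj, L (tens A B) = tens (L A) (L B).

Definition coh_eq1 (A B : Obj) :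
  tens (tens A (L A)) (tens B (L B)) = tens (tens A (tens (L A) B)) (L B) :=
  eq_trans (assoc (tens A (L A)) B (L B))
    (f_equal (fun X => tens X (L B)) (eq_sym (assoc A (L A) B))).

Definition coh_eq2 (A B : Obj) :
  tens (tens A (tens B (L A))) (L B) = tens (tens A B) (L (tens A B)) :=
  eq_trans (f_equal (fun X => tens X (L B)) (assoc A B (L A)))
    (eq_trans (eq_sym (assoc (tens A B) (L A) (L B)))
       (f_equal (fun X => tens (tens A B) X) (eq_sym (HL A B)))).

(** (id_A ⊗ σ_{L_A,B} ⊗ id_{L_B}) ∘ (p_A ⊗ p_B) *)
Definition coherent_p (A B : Obj) : Hom (tens A B) (tens (tens A B) (L (tens A B))) :=
  castH Hom eq_refl (coh_eq2 A B)
    (comp C (tensh C (tensh C (idp C A) (sym C (L A) B)) (idp C (L B)))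
       (castH Hom eq_refl (coh_eq1 A B) (tensh C (p A) (p B)))).
End Disc.

(* Main.v *)
Require Import Defs.
From Stdlib Require Import ProofIrrelevance Setoid.

Section Gen.
Context {Obj : Type} {Hom : Obj -> Obj -> Type}.

Lemma castH_irr {A A' B B' : Obj} (e1 e1' : A = A') (e2 e2' : B = B') (f : Hom A B) :
  castH Hom e1 e2 f = castH Hom e1' e2' f.
Proof. rewrite (proof_irrelevance _ e1 e1'), (proof_irrelevance _ e2 e2'). reflexivity. Qed.
End Gen.

Section K.
Context {Obj : Type} {Hom : Obj -> Obj -> Type} {tens : Obj -> Obj -> Obj} {I : Obj}.
Variable C : ProcessTheoryD Obj Hom tens I.
Local Notation ax := (pt_ax _ _ _ _ C).
Local Notation "g ∘ f" := (comp C g f) (at level 40, left associativity).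
Local Notation "f ⊗ g" := (tensh C f g) (at level 35).
Local Notation id := (idp C).

Definition kap {X Y : Obj} (e : X = Y) : Hom X Y := castH Hom eq_refl e (idp C X).

Lemma cid_l {A B} (f : Hom A B) : id B ∘ f = f. Proof. apply (comp_id_l _ ax). Qed.
Lemma cid_r {A B} (f : Hom A B) : f ∘ id A = f. Proof. apply (comp_id_r _ ax). Qed.
Lemma cA {A B D E} (f : Hom A B) (g : Hom B D) (h : Hom D E) : h ∘ (g ∘ f) = h ∘ g ∘ f.
Proof. apply (comp_assoc _ ax). Qed.
Lemma tc {A B D A' B' D'} (f : Hom A B) (f' : Hom B D) (g : Hom A' B') (g' : Hom B' D') :
  (f' ∘ f) ⊗ (g' ∘ g) = (f' ⊗ g') ∘ (f ⊗ g).
Proof. apply (tensh_comp _ ax). Qed.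
Lemma tid A B : id A ⊗ id B = id (tens A B). Proof. apply (tensh_id _ ax). Qed.

Lemma castH_k {A A' B B'} (eA : A = A') (eB : B = B') (f : Hom A B) :
  castH Hom eA eB f = kap eB ∘ (f ∘ kap (eq_sym eA)).
Proof. destruct eA, eB. unfold kap; simpl. rewrite cid_l, cid_r. reflexivity. Qed.

Lemma castH_cod {A B B'} (eB : B = B') (f : Hom A B) :
  castH Hom eq_refl eB f = kap eB ∘ f.
Proof. rewrite castH_k. simpl. unfold kap at 2. simpl. rewrite cid_r. reflexivity. Qed.

Lemma kap_irr {X Y} (e e' : X = Y) : kap e = kap e'.
Proof. rewrite (proof_irrelevance _ e e'). reflexivity. Qed.
Lemma kap_refl X : kap (eq_refl X) = id X. Proof. reflexivity. Qed.
Lemma kap_trans {X Y Z} (e1 : X = Y) (e2 : Y = Z) : kap (eq_trans e1 e2) = kap e2 ∘ kap e1.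
Proof. destruct e2, e1. simpl. unfold kap; simpl. rewrite cid_l. reflexivity. Qed.
Lemma kap_inv_l {X Y} (e : X = Y) : kap (eq_sym e) ∘ kap e = id X.
Proof. destruct e. unfold kap; simpl. apply cid_l. Qed.
Lemma kap_inv_r {X Y} (e : X = Y) : kap e ∘ kap (eq_sym e) = id Y.
Proof. destruct e. unfold kap; simpl. apply cid_l. Qed.
Lemma kap_tens {X Y X' Y'} (e1 : X = Y) (e2 : X' = Y') :
  kap e1 ⊗ kap e2 = kap (f_equal2 tens e1 e2).
Proof. destruct e1, e2. rewrite (kap_irr (f_equal2 tens eq_refl eq_refl) eq_refl). exact (tid _ _). Qed.
Lemma kap_tens_l {X Y} Z (e : X = Y) : kap (f_equal (fun W => tens W Z) e) = kap e ⊗ id Z.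
Proof. destruct e. unfold kap; simpl. symmetry; apply tid. Qed.
Lemma kap_tens_r {X Y} Z (e : X = Y) : kap (f_equal (fun W => tens Z W) e) = id Z ⊗ kap e.
Proof. destruct e. unfold kap; simpl. symmetry; apply tid. Qed.
Lemma kap_nat (F : forall X, Hom X X) {X Y} (e : X = Y) : kap e ∘ F X = F Y ∘ kap e.
Proof. destruct e. unfold kap; simpl. rewrite cid_l, cid_r. reflexivity. Qed.
Lemma kap_top {X Y} (e : X = Y) : top C Y ∘ kap e = top C X.
Proof. destruct e. unfold kap; simpl. apply cid_r. Qed.
End K.


Section M.
Context {Obj : Type} {Hom : Obj -> Obj -> Type} {tens : Obj -> Obj -> Obj} {I : Obj}.
Variable C : ProcessTheoryD Obj Hom tens I.
Local Notation ax := (pt_ax _ _ _ _ C).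
Local Notation "g ∘ f" := (comp C g f) (at level 40, left associativity).
Local Notation "f ⊗ g" := (tensh C f g) (at level 35).
Local Notation id := (idp C).
Local Notation kap := (kap C).
Local Notation T := (top C).
Local Notation as_ := (tens_assoc _ ax).
Local Notation ur := (tens_unit_r _ ax).
Local Notation ul := (tens_unit_l _ ax).

Ltac kcol := repeat (rewrite (cA C) || rewrite <- (kap_trans C) || rewrite (kap_tens C)
   || rewrite <- (kap_refl C)).

Lemma tcr {X A B D} (f : Hom A B) (g : Hom B D) : id X ⊗ (g ∘ f) = (id X ⊗ g) ∘ (id X ⊗ f).
Proof. rewrite <- (tc C). rewrite (cid_l C). reflexivity. Qed.
Lemma tcl {X A B D} (f : Hom A B) (g : Hom B D) : (g ∘ f) ⊗ id X = (g ⊗ id X) ∘ (f ⊗ id X).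
Proof. rewrite <- (tc C). rewrite (cid_l C). reflexivity. Qed.
Lemma tcl' {A B D X Y} (f : Hom A B) (g : Hom B D) (h : Hom X Y) : (g ⊗ h) ∘ (f ⊗ id X) = (g ∘ f) ⊗ h.
Proof. rewrite <- (tc C). rewrite (cid_r C). reflexivity. Qed.

Lemma assocK {A B D A' B' D'} (f : Hom A A') (g : Hom B B') (h : Hom D D') :
  ((f ⊗ g) ⊗ h) ∘ kap (as_ A B D) = kap (as_ A' B' D') ∘ (f ⊗ (g ⊗ h)).
Proof.
  rewrite <- (tensh_assoc _ ax). rewrite (castH_k C).
  rewrite <- !(cA C). rewrite (kap_inv_l C). rewrite (cid_r C). reflexivity.
Qed.
Lemma assocK' {A B D A' B' D'} (f : Hom A A') (g : Hom B B') (h : Hom D D') :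
  (f ⊗ (g ⊗ h)) ∘ kap (eq_sym (as_ A B D)) = kap (eq_sym (as_ A' B' D')) ∘ ((f ⊗ g) ⊗ h).
Proof.
  rewrite <- (tensh_assoc _ ax). rewrite (castH_k C).
  rewrite !(cA C). rewrite (kap_inv_l C). rewrite (cid_l C). reflexivity.
Qed.

Lemma topT X Y : T (tens X Y) = kap (ul I) ∘ (T X ⊗ T Y).
Proof. rewrite (top_tens _ _ _ _ C). apply (castH_cod C). Qed.

Lemma symI B : sym C I B = kap (eq_sym (ur B)) ∘ kap (ul B).
Proof.
  assert (H1 : sym C B I = kap (eq_sym (ul B)) ∘ kap (ur B)).
  { pose proof (sym_unit _ ax B) as H. rewrite (castH_k C) in H.
    apply (f_equal (fun g => kap (eq_sym (ul B)) ∘ (g ∘ kap (ur B)))) in H.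
    rewrite (cid_l C) in H. rewrite <- H.
    rewrite !(cA C). rewrite (kap_inv_l C), (cid_l C).
    rewrite <- (cA C). rewrite (kap_inv_l C), (cid_r C). reflexivity. }
  pose proof (sym_inv _ ax B I) as H2. change (sym C I B ∘ sym C B I = id (tens B I)) in H2.
  rewrite H1 in H2.
  apply (f_equal (fun g => g ∘ (kap (eq_sym (ur B)) ∘ kap (ul B)))) in H2.
  rewrite (cid_l C) in H2. rewrite <- H2.
  rewrite <- !(cA C). rewrite (cA C (kap (ul B)) (kap (eq_sym (ur B))) (kap (ur B))).
  rewrite (kap_inv_r C), (cid_l C), (kap_inv_l C), (cid_r C). reflexivity.
Qed.


Lemma pre {A B D E} {X : Hom A B} {Y : Hom E A} {Z : Hom D B} {W : Hom E D}
  (H : X ∘ Y = Z ∘ W) {Q} (P : Hom B Q) : P ∘ X ∘ Y = P ∘ Z ∘ W.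
Proof. rewrite <- !(cA C). rewrite H. reflexivity. Qed.

Lemma pre1 {A B E} {X : Hom A B} {Y : Hom E A} {Z : Hom E B}
  (H : X ∘ Y = Z) {Q} (P : Hom B Q) : P ∘ X ∘ Y = P ∘ Z.
Proof. rewrite <- !(cA C). rewrite H. reflexivity. Qed.

Lemma tcsplit {A B D X Y} (f : Hom A B) (g : Hom B D) (h : Hom X Y) : (g ∘ f) ⊗ h = (g ⊗ id Y) ∘ (f ⊗ h).
Proof. rewrite <- (tc C). rewrite (cid_l C). reflexivity. Qed.
Lemma assocE {A B D A' B' D'} (f : Hom A A') (g : Hom B B') (h : Hom D D') :
  f ⊗ (g ⊗ h) = kap (eq_sym (as_ A' B' D')) ∘ ((f ⊗ g) ⊗ h) ∘ kap (as_ A B D).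
Proof. rewrite <- (cA C). rewrite assocK. rewrite (cA C), (kap_inv_l C), (cid_l C). reflexivity. Qed.

Lemma unitr_k {A B} (f : Hom A B) : kap (ur B) ∘ (f ⊗ id I) = f ∘ kap (ur A).
Proof.
  pose proof (tensh_unit_r _ ax A B f) as H. rewrite (castH_k C) in H.
  rewrite <- H at 2. rewrite <- !(cA C). rewrite (kap_inv_l C), (cid_r C). reflexivity.
Qed.
Lemma unitl_k {A B} (f : Hom A B) : kap (ul B) ∘ (id I ⊗ f) = f ∘ kap (ul A).
Proof.
  pose proof (tensh_unit_l _ ax A B f) as H. rewrite (castH_k C) in H.
  rewrite <- H at 2. rewrite <- !(cA C). rewrite (kap_inv_l C), (cid_r C). reflexivity.
Qed.
Lemma unitr_k' {A B} (f : Hom A B) : (f ⊗ id I) ∘ kap (eq_sym (ur A)) = kap (eq_sym (ur B)) ∘ f.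
Proof.
  pose proof (tensh_unit_r _ ax A B f) as H. rewrite (castH_k C) in H.
  rewrite <- H at 2. rewrite !(cA C). rewrite (kap_inv_l C), (cid_l C). reflexivity.
Qed.

Lemma core A B LA LB :
  kap (ur (tens A B)) ∘ ((id (tens A B) ⊗ T (tens LA LB)) ∘ (kap (eq_sym (as_ (tens A B) LA LB)) ∘ ((kap (as_ A B LA) ⊗ id LB) ∘ (((id A ⊗ sym C LA B) ⊗ id LB) ∘ ((kap (eq_sym (as_ A LA B)) ⊗ id LB) ∘ kap (as_ (tens A LA) B LB))))))
  = (kap (ur A) ⊗ kap (ur B)) ∘ ((id A ⊗ T LA) ⊗ (id B ⊗ T LB)).
Proof.
  rewrite topT, tcr. rewrite !(cA C).
  rewrite (pre (assocK' _ _ _)).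
  rewrite <- !(cA C (kap (as_ (tens A LA) B LB))).
  rewrite (pre1 (tcl' _ _ _)). rewrite (pre1 (tcl' _ _ _)). rewrite (cA C). rewrite (pre1 (tcl' _ _ _)).
  rewrite !(cA C). rewrite <- (tid C A B). rewrite assocK.
  rewrite (pre1 (eq_sym (tcr _ _))). rewrite <- (sym_nat _ ax). rewrite symI.
  rewrite tcr. rewrite !(cA C). rewrite (pre (assocK' _ _ _)).
  rewrite (tcsplit _ _ (T LB)).
  rewrite (assocE (id A ⊗ T LA)).
  rewrite !(cA C).
  f_equal. f_equal. kcol. apply (kap_irr C).
Qed.

Section N.
Variable L : Obj -> Obj.
Variable p : forall A : Obj, Hom A (tens A (L A)).
Hypothesis Hcausal : forall A : Obj, causal C (p A).
Hypothesis Hidem : forall A : Obj, eproj C L p A ∘ eproj C L p A = eproj C L p A.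
Variable HL : forall A B : Obj, L (tens A B) = tens (L A) (L B).
Hypothesis Hp : forall A B : Obj, p (tens A B) = coherent_p C L p HL A B.
Local Notation e := (eproj C L p).

Lemma eproj_k A : e A = kap (ur A) ∘ ((id A ⊗ T (L A)) ∘ p A).
Proof. unfold eproj, unit_r. apply (castH_cod C). Qed.

Lemma E A B : e (tens A B) = e A ⊗ e B.
Proof.
  rewrite !eproj_k. rewrite Hp. unfold coherent_p, coh_eq2, coh_eq1, assoc.
  rewrite !(castH_cod C). rewrite !(kap_trans C). rewrite !(kap_tens_l C), !(kap_tens_r C).
  rewrite !(tc C). rewrite !(cA C). rewrite <- core.
  rewrite !(cA C). rewrite (pre1 (eq_sym (tcr _ _))). rewrite (kap_top C).
  rewrite ?(cA C). reflexivity.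
Qed.

Lemma top_e A : T A ∘ e A = T A.
Proof.
  rewrite eproj_k. rewrite !(cA C).
  rewrite <- unitr_k. rewrite (kap_irr C (ur I) (ul I)).
  rewrite <- (cA C (id A ⊗ T (L A))). rewrite <- (tc C). rewrite (cid_l C), (cid_r C). rewrite <- topT.
  apply Hcausal.
Qed.

Lemma e_nat {X Y} (q : X = Y) : e Y ∘ kap q = kap q ∘ e X.
Proof. symmetry. apply (kap_nat C e). Qed.

Lemma e_I_top A : e I ∘ T A = T A.
Proof.
  assert (H : e A = kap (ul A) ∘ e (tens I A) ∘ kap (eq_sym (ul A))).
  { rewrite (kap_nat C e). rewrite <- (cA C), (kap_inv_r C), (cid_r C). reflexivity. }
  rewrite <- (top_e A) at 2. rewrite H, E.
  rewrite !(cA C). rewrite <- unitl_k.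
  rewrite <- ((cA C) _ (id I ⊗ T A)). rewrite <- (tc C). rewrite (cid_l C), top_e.
  rewrite <- (cid_r C (e I)) at 2. rewrite <- (cid_l C (T A)) at 2. rewrite (tc C).
  rewrite !(cA C). rewrite (kap_irr C (ul I) (ur I)). rewrite unitr_k.
  rewrite (kap_irr C (ur I) (ul I)). rewrite <- !(cA C). rewrite (cA C _ _ (kap (ul I))).
  rewrite unitl_k. rewrite <- (cA C). rewrite (kap_inv_r C), (cid_r C). reflexivity.
Qed.

Definition fixd {A B} (h : Hom A B) := e B ∘ (h ∘ e A) = h.
Lemma fixd_restr {A B} (h : Hom A B) : fixd h -> exists f, h = e B ∘ (f ∘ e A).
Proof. intro H. exists h. symmetry. exact H. Qed.
Lemma restr_fixd {A B} (h : Hom A B) : (exists f, h = e B ∘ (f ∘ e A)) -> fixd h.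
Proof.
  intros [f ->]. unfold fixd. rewrite !(cA C). rewrite Hidem.
  rewrite <- !(cA C). rewrite Hidem. reflexivity.
Qed.
Lemma fix_l {A B} (h : Hom A B) : fixd h -> e B ∘ h = h.
Proof. unfold fixd. intro H. rewrite <- H at 1. rewrite (cA C), Hidem. exact H. Qed.
Lemma fix_r {A B} (h : Hom A B) : fixd h -> h ∘ e A = h.
Proof. unfold fixd. intro H. rewrite <- H at 1. rewrite <- !(cA C), Hidem. exact H. Qed.

Local Notation RH := (restrHom C L p).
Lemma rfix {A B} (f : RH A B) : fixd (proj1_sig f).
Proof. apply restr_fixd. exact (proj2_sig f). Qed.

Lemma Esym A B : e (tens B A) ∘ sym C A B = sym C A B ∘ e (tens A B).
Proof. rewrite !E. symmetry. apply (sym_nat _ ax). Qed.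

Definition rc (A B D : Obj) (g : RH B D) (f : RH A B) : RH A D.
Proof.
  exists (proj1_sig g ∘ proj1_sig f). apply fixd_restr. unfold fixd.
  rewrite !(cA C). rewrite (fix_l _ (rfix g)). rewrite <- (cA C). rewrite (fix_r _ (rfix f)). reflexivity.
Defined.
Definition ri (A : Obj) : RH A A.
Proof. exists (e A). apply fixd_restr. unfold fixd. rewrite !Hidem. reflexivity. Defined.
Definition rt (A B D E' : Obj) (f : RH A B) (g : RH D E') : RH (tens A D) (tens B E').
Proof.
  exists (proj1_sig f ⊗ proj1_sig g). apply fixd_restr. unfold fixd.
  rewrite !E. rewrite <- !(tc C). rewrite (rfix f), (rfix g). reflexivity.
Defined.
Definition rs (A B : Obj) : RH (tens A B) (tens B A).
Proof.
  exists (sym C A B ∘ e (tens A B)). apply fixd_restr. unfold fixd.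
  rewrite <- (cA C), Hidem. rewrite (cA C), Esym. rewrite <- (cA C), Hidem. reflexivity.
Defined.
Definition rtop (A : Obj) : RH A I.
Proof. exists (T A). apply fixd_restr. unfold fixd. rewrite top_e. apply e_I_top. Defined.

Definition opsD : PTOps Obj RH tens I := Build_PTOps Obj RH tens I rc ri rt rs.

Lemma sig_eq {A B} (x y : RH A B) : proj1_sig x = proj1_sig y -> x = y.
Proof. destruct x as [x hx], y as [y hy]. simpl. intros ->. f_equal. apply proof_irrelevance. Qed.

Lemma proj_castH {A A' B B'} (eA : A = A') (eB : B = B') (f : RH A B) :
  proj1_sig (castH RH eA eB f) = castH Hom eA eB (proj1_sig f).
Proof. destruct eA, eB. reflexivity. Qed.

Lemma pc {A B D} (g : RH B D) (f : RH A B) : proj1_sig (comp opsD g f) = proj1_sig g ∘ proj1_sig f.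
Proof. reflexivity. Qed.
Lemma pi A : proj1_sig (idp opsD A) = e A. Proof. reflexivity. Qed.
Lemma pt {A B D E'} (f : RH A B) (g : RH D E') : proj1_sig (tensh opsD f g) = proj1_sig f ⊗ proj1_sig g.
Proof. reflexivity. Qed.
Lemma ps A B : proj1_sig (sym opsD A B) = sym C A B ∘ e (tens A B). Proof. reflexivity. Qed.

Lemma tsplit_r {A B D X Y} (f : Hom X Y) (g : Hom B D) (h : Hom A B) : f ⊗ (g ∘ h) = (f ⊗ g) ∘ (id X ⊗ h).
Proof. rewrite <- (tc C). rewrite (cid_r C). reflexivity. Qed.
Lemma tsplit_l {A B D X Y} (f : Hom X Y) (g : Hom B D) (h : Hom A B) : (g ∘ h) ⊗ f = (g ⊗ f) ∘ (h ⊗ id X).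
Proof. rewrite <- (tc C). rewrite (cid_r C). reflexivity. Qed.
Lemma tsplit_r' {A B D X Y} (f : Hom X Y) (g : Hom B D) (h : Hom A B) : f ⊗ (g ∘ h) = (id Y ⊗ g) ∘ (f ⊗ h).
Proof. rewrite <- (tc C). rewrite (cid_l C). reflexivity. Qed.
Lemma tsplit {A B X Y} (f : Hom X Y) (g : Hom A B) : f ⊗ g = (f ⊗ id B) ∘ (id X ⊗ g).
Proof. rewrite <- (tc C). rewrite (cid_l C), (cid_r C). reflexivity. Qed.

Lemma fix_tl {A B D E'} (f : RH A B) (g : RH D E') : e (tens B E') ∘ (proj1_sig f ⊗ proj1_sig g) = proj1_sig f ⊗ proj1_sig g.
Proof. rewrite E, <- (tc C), (fix_l _ (rfix f)), (fix_l _ (rfix g)). reflexivity. Qed.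
Lemma fix_tr {A B D E'} (f : RH A B) (g : RH D E') : (proj1_sig f ⊗ proj1_sig g) ∘ e (tens A D) = proj1_sig f ⊗ proj1_sig g.
Proof. rewrite E, <- (tc C), (fix_r _ (rfix f)), (fix_r _ (rfix g)). reflexivity. Qed.

Lemma Esym_t A B D : e (tens (tens B A) D) ∘ (sym C A B ⊗ id D) = (sym C A B ⊗ id D) ∘ e (tens (tens A B) D).
Proof. rewrite !(E (tens _ _) D). rewrite <- !(tc C). rewrite (cid_l C), (cid_r C), Esym. reflexivity. Qed.

Lemma hexE A B D : sym C A (tens B D) ∘ e (tens A (tens B D)) =
  castH Hom eq_refl (as_ B D A) ((e B ⊗ (sym C A D ∘ e (tens A D))) ∘
     castH Hom (eq_sym (as_ A B D)) (eq_sym (as_ B A D)) ((sym C A B ∘ e (tens A B)) ⊗ e D)).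
Proof.
  rewrite (sym_hex _ ax). rewrite !(castH_cod C). rewrite !(castH_k C).
  rewrite tsplit_r', tcsplit. rewrite <- !E.
  rewrite !(cA C).
  repeat rewrite (pre (e_nat _)). rewrite (pre (Esym_t _ _ _)). repeat rewrite (pre (e_nat _)). rewrite (pre1 (Hidem _)).
  rewrite ?(cA C). reflexivity.
Qed.

Lemma axD : IsProcessTheory opsD.
Proof.
  refine (@Build_IsProcessTheory Obj RH tens I opsD _ _ _ _ _ (tens_assoc _ ax) (tens_unit_l _ ax) (tens_unit_r _ ax) _ _ _ _ _ _ _).
  - intros. apply sig_eq. rewrite !pc. apply (cA C).
  - intros. apply sig_eq. rewrite pc, pi. apply fix_l, rfix.
  - intros. apply sig_eq. rewrite pc, pi. apply fix_r, rfix.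
  - intros. apply sig_eq. rewrite pc, !pt, !pc. apply (tc C).
  - intros. apply sig_eq. rewrite pt, !pi. symmetry. apply E.
  - intros. apply sig_eq. rewrite proj_castH, !pt. apply (tensh_assoc _ ax).
  - intros A B f. apply sig_eq. rewrite proj_castH, pt, pi.
    pose proof (fix_l _ (rfix f)) as Hf. set (fh := proj1_sig f) in *.
    rewrite <- Hf at 1. rewrite tsplit_r. rewrite <- E. rewrite (castH_k C).
    rewrite !(cA C). rewrite (kap_nat C e). rewrite <- !(cA C). rewrite <- (castH_k C).
    rewrite (tensh_unit_l _ ax). exact Hf.
  - intros A B f. apply sig_eq. rewrite proj_castH, pt, pi.
    pose proof (fix_l _ (rfix f)) as Hf. set (fh := proj1_sig f) in *.
    rewrite <- Hf at 1. rewrite tsplit_l. rewrite <- E. rewrite (castH_k C).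
    rewrite !(cA C). rewrite (kap_nat C e). rewrite <- !(cA C). rewrite <- (castH_k C).
    rewrite (tensh_unit_r _ ax). exact Hf.
  - intros. apply sig_eq. rewrite !pc, !pt, !ps.
    rewrite <- (cA C). rewrite fix_tl. rewrite (cA C). rewrite <- (sym_nat _ ax).
    rewrite <- (cA C). rewrite fix_tr. reflexivity.
  - intros. apply sig_eq. rewrite !pc, !ps, pi.
    rewrite <- !(cA C). rewrite (cA C (e (tens A B)) (sym C A B) (e (tens B A))).
    rewrite Esym. rewrite <- (cA C), Hidem. rewrite (cA C). rewrite (sym_inv _ ax). apply (cid_l C).
  - intros. apply sig_eq. rewrite ps, proj_castH, pc, proj_castH, pt, pt, pi, ps, pi, ps.
    apply hexE.
  - intros. apply sig_eq. rewrite proj_castH, ps, pi.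
    pose proof (sym_unit _ ax A) as H. rewrite (castH_k C) in H.
    rewrite (castH_k C). rewrite <- (cA C (kap (eq_sym (ur A)))). rewrite e_nat.
    rewrite !(cA C). rewrite !(cA C) in H. rewrite H. apply (cid_l C).
Qed.

Lemma topTensD : forall A B : Obj, rtop (tens A B) =
  castH RH eq_refl (tens_unit_l opsD axD I) (tensh opsD (rtop A) (rtop B)).
Proof.
  intros. apply sig_eq. rewrite proj_castH, pt. cbn [proj1_sig rtop].
  rewrite (top_tens _ _ _ _ C). apply castH_irr.
Qed.

Definition Dth : ProcessTheoryD Obj RH tens I :=
  Build_ProcessTheoryD Obj RH tens I opsD axD rtop topTensD.

Lemma pk A : (id A ⊗ T (L A)) ∘ p A = kap (eq_sym (ur A)) ∘ e A.
Proof. rewrite eproj_k. rewrite (cA C), (kap_inv_l C), (cid_l C). reflexivity. Qed.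

Definition leak (A : Obj) : RH A (tens A (L A)).
Proof.
  exists ((e A ⊗ e (L A)) ∘ (p A ∘ e A)). apply fixd_restr. unfold fixd.
  rewrite E. rewrite <- !(cA C). rewrite Hidem. rewrite (cA C). rewrite <- (tc C), !Hidem. reflexivity.
Defined.

Lemma leak_ok A : is_leak Dth (leak A).
Proof.
  unfold is_leak. apply sig_eq. rewrite proj_castH.
  change (proj1_sig (comp opsD (tensh opsD (idp opsD A) (rtop (L A))) (leak A)) =
    castH Hom eq_refl (eq_sym (unit_r Dth A)) (e A)).
  rewrite pc, pt, pi. cbn [proj1_sig rtop leak].
  rewrite (castH_irr eq_refl eq_refl (eq_sym (unit_r Dth A)) (eq_sym (ur A))).
  rewrite (castH_cod C).
  rewrite (cA C). rewrite <- (tc C), Hidem, top_e.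
  rewrite tsplit. rewrite !(cA C). rewrite <- (cA C (p A)). rewrite pk.
  rewrite (cA C). rewrite unitr_k'. rewrite <- !(cA C). rewrite !Hidem. reflexivity.
Qed.

Lemma main_sec :
  exists D : ProcessTheoryD Obj (restrHom C L p) tens I,
    (forall (A B E : Obj) (g : restrHom C L p B E) (f : restrHom C L p A B),
        proj1_sig (comp D g f) = comp C (proj1_sig g) (proj1_sig f))
    /\ (forall A : Obj, proj1_sig (idp D A) = eproj C L p A)
    /\ (forall (A B A' B' : Obj) (f : restrHom C L p A B) (g : restrHom C L p A' B'),
        proj1_sig (tensh D f g) = tensh C (proj1_sig f) (proj1_sig g))
    /\ (forall A B : Obj,
        proj1_sig (sym D A B) = comp C (sym C A B) (eproj C L p (tens A B)))
    /\ (forall A : Obj, proj1_sig (top D A) = top C A)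
    /\ (forall A : Obj, comp C (top C A) (eproj C L p A) = top C A)
    /\ (forall A : Obj, exists l : restrHom C L p A (tens A (L A)),
          proj1_sig l
            = comp C (tensh C (eproj C L p A) (eproj C L p (L A)))
                (comp C (p A) (eproj C L p A))
          /\ is_leak D l).
Proof.
  exists Dth. split; [|split; [|split; [|split; [|split; [|split]]]]].
  - intros. reflexivity.
  - intros. reflexivity.
  - intros. reflexivity.
  - intros. reflexivity.
  - intros. reflexivity.
  - exact top_e.
  - intros A. exists (leak A). split; [reflexivity | apply leak_ok].
Qed.

End N.
End M.

Theorem theorem1 (Obj : Type) (Hom : Obj -> Obj -> Type)
  (tens : Obj -> Obj -> Obj) (I : Obj) (C : ProcessTheoryD Obj Hom tens I)
  (L : Obj -> Obj) (p : forall A : Obj, Hom A (tens A (L A)))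
  (Hcausal : forall A : Obj, causal C (p A))
  (Hidem : forall A : Obj,
     comp C (eproj C L p A) (eproj C L p A) = eproj C L p A)
  (HL : forall A B : Obj, L (tens A B) = tens (L A) (L B))
  (Hp : forall A B : Obj, p (tens A B) = coherent_p C L p HL A B) :
  exists D : ProcessTheoryD Obj (restrHom C L p) tens I,
    (forall (A B E : Obj) (g : restrHom C L p B E) (f : restrHom C L p A B),
        proj1_sig (comp D g f) = comp C (proj1_sig g) (proj1_sig f))
    /\ (forall A : Obj, proj1_sig (idp D A) = eproj C L p A)
    /\ (forall (A B A' B' : Obj) (f : restrHom C L p A B) (g : restrHom C L p A' B'),
        proj1_sig (tensh D f g) = tensh C (proj1_sig f) (proj1_sig g))
    /\ (forall A B : Obj,
        proj1_sig (sym D A B) = comp C (sym C A B) (eproj C L p (tens A B)))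
    /\ (forall A : Obj, proj1_sig (top D A) = top C A)
    /\ (forall A : Obj, comp C (top C A) (eproj C L p A) = top C A)
    /\ (forall A : Obj, exists l : restrHom C L p A (tens A (L A)),
          proj1_sig l
            = comp C (tensh C (eproj C L p A) (eproj C L p (L A)))
                (comp C (p A) (eproj C L p A))
          /\ is_leak D l).
Proof.
  exact (@main_sec Obj Hom tens I C L p Hcausal Hidem HL Hp).
Qed.
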